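(* If $G$ is a minimally $1/2$-tough claw-free graph, then every cycle of $G$ has length $3$.
   Context: All graphs are finite, simple and undirected. A graph is claw-free if it contains no induced subgraph isomorphic to $K_{1,3}$. $\omega(H)$ denotes the number of components of $H$. A cutset of $G$ is a vertex set $S$ with $G-S$ disconnected. For positive real $t$, $G$ is $t$-tough if $\omega(G-S)\le |S|/t$ for every cutset $S$; the toughness $\tau(G)$ is the largest such $t$, with $\tau(K_n)=\infty$ for all $n\ge1$. $G$ is minimally $t$-tough if $\tau(G)=t$ and $\tau(G-e)<t$ for every edge $e$ of $G$. *)

(* Defs.v *)
From mathcomp Require Import all_boot all_order all_algebra.
Set Implicit Arguments. Unset Strict Implicit. Unset Printing Implicit Defensive.
Import Order.TTheory GRing.Theory Num.Theory.

Section Graphs.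
Variable T : finType.

Definition simple_graph (e : rel T) : Prop :=
  symmetric e /\ irreflexive e.

Definition del_vertices (e : rel T) (S : {set T}) : rel T :=
  fun x y => [&& e x y, x \notin S & y \notin S].

Definition del_edge (e : rel T) (u v : T) : rel T :=
  fun x y => e x y && ~~ (((x == u) && (y == v)) || ((x == v) && (y == u))).

Definition ncomp (e : rel T) (S : {set T}) : nat :=
  #|[set [set y in ~: S | connect (del_vertices e S) x y] | x in ~: S]|.

Definition cutset (e : rel T) (S : {set T}) : bool := 1 < ncomp e S.

(* G is t-tough: omega(G-S) <= |S|/t for every cutset S (t > 0),
   written multiplicatively *)
Definition tough (e : rel T) (t : rat) : Prop :=
  forall S : {set T}, cutset e S -> (t * (ncomp e S)%:R <= (#|S|)%:R)%R.

(* tau(G) = t : t is the largest value for which G is t-tough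
   (never holds for graphs without cutsets, whose toughness is infinite) *)
Definition toughness_is (e : rel T) (t : rat) : Prop :=
  (0 <= t)%R /\ tough e t /\ forall t' : rat, (t < t')%R -> ~ tough e t'.

Definition minimally_tough (e : rel T) (t : rat) : Prop :=
  toughness_is e t /\
  forall u v : T, e u v ->
    exists t' : rat, toughness_is (del_edge e u v) t' /\ (t' < t)%R.

Definition claw_free (e : rel T) : Prop :=
  ~ exists x a b c : T,
      [/\ e x a, e x b & e x c] /\
      [/\ a != b, a != c & b != c] /\
      [/\ ~~ e a b, ~~ e a c & ~~ e b c].

Definition is_graph_cycle (e : rel T) (s : seq T) : bool :=
  [&& 3 <= size s, uniq s & cycle e s].

End Graphs.

(* Main.v *)
Require Import Defs.
From mathcomp Require Import all_boot all_order all_algebra.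
From mathcomp Require Import lra.
Import Order.TTheory GRing.Theory Num.Theory.

Lemma union_bound (I U : finType) (A : {set I}) (F : I -> {set U}) (B : {set U}) :
  B \subset \bigcup_(i in A) F i -> #|B| <= \sum_(i in A) #|F i|.
Proof.
move=> /subset_leq_card /leq_trans; apply.
rewrite -!big_enum; elim: (enum A) => [|i s IH] /=; first by rewrite !big_nil cards0.
rewrite !big_cons; apply: leq_trans (leq_card_setU _ _) _; by rewrite leq_add2l.
Qed.

Lemma exit_path (T : finType) (r : rel T) (P : pred T) x p :
  path r x p -> P x -> ~~ P (last x p) ->
  exists p1 y p2, [/\ p = p1 ++ y :: p2, all P (x :: p1), ~~ P y & r (last x p1) y].
Proof.
elim: p x => [|y p IH] x /=; first by move=> _ ->.
case/andP=> rxy pyp Px Plast.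
case Py: (P y).
  have [p1 [z [p2 [-> allp nz rz]]]] := IH y pyp Py Plast.
  by exists (y :: p1), z, p2; split => //=; rewrite Px.
by exists [::], y, p; split => //=; rewrite ?Px ?Py.
Qed.

Lemma del_vertices_sym (T : finType) (e : rel T) S :
  symmetric e -> symmetric (del_vertices e S).
Proof.
move=> se x y; rewrite /del_vertices se.
by case: (x \in S); case: (y \in S); rewrite /= ?andbF.
Qed.

Lemma del_edge_sym (T : finType) (e : rel T) u v :
  symmetric e -> symmetric (del_edge e u v).
Proof.
move=> se x y; rewrite /del_edge se; congr (_ && ~~ _).
by rewrite orbC; congr (_ || _); apply: andbC.
Qed.

Lemma tough_half (T : finType) (e : rel T) S :
  tough e (1/2)%R -> cutset e S -> ncomp e S <= 2 * #|S|.
Proof.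
move=> /(_ S) H /H; rewrite -(ler_nat rat) natrM => H'.
lra.
Qed.

Lemma ncomp_eq (T : finType) (e1 e2 : rel T) S :
  (forall x y, connect (del_vertices e1 S) x y = connect (del_vertices e2 S) x y) ->
  ncomp e1 S = ncomp e2 S.
Proof.
move=> H; rewrite /ncomp.
have E : (fun x => [set y in ~: S | connect (del_vertices e1 S) x y]) =1
         (fun x => [set y in ~: S | connect (del_vertices e2 S) x y]).
  by move=> x; apply/setP => y; rewrite !inE H.
by rewrite (eq_imset _ E).
Qed.

Lemma head_rev (T : Type) (x0 : T) s : head x0 (rev s) = last x0 s.
Proof. by case/lastP: s => // s z; rewrite rev_rcons last_rcons. Qed.

Lemma head_rcons (T : Type) (x0 u : T) p : head x0 (rcons p u) = head u p.
Proof. by case: p. Qed.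

Lemma side (T : finType) (e : rel T) (S K : {set T}) (u v : T) p :
  uniq (u :: v :: p) -> cycle e (u :: v :: p) -> p != [::] ->
  v \in K -> u \notin K ->
  (forall b z, b \in K -> z \notin K -> e b z -> z \notin S -> (b == v) && (z == u)) ->
  exists x b, [/\ x \in S, b \in K, e b x & (b == v) ==> (x == head u p)].
Proof.
move=> un cyc pn vK uK H.
have pth : path e v (rcons p u) by move: cyc => /= /andP[].
have uK' : ~~ (fun y => y \in K) (last v (rcons p u)) by rewrite /= last_rcons.
have [p1 [z [p2 [E allK nz ebz]]]] :=
  @exit_path _ _ (fun y => y \in K) _ _ pth vK uK'.
have bK : last v p1 \in K by apply: (allP allK); apply: mem_last.
have vnot : v \notin rcons p u.
  move: un => /= /andP[]; rewrite mem_rcons !inE !negb_or => /andP[uv _] /andP[-> _].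
  by rewrite andbT eq_sym.
have zh : last v p1 = v -> z = head u p.
  case: p1 E {allK bK ebz} => [|q p1'] E.
    by move=> _; rewrite -(@head_rcons _ u u p) E.
  move=> Hl; have : v \in rcons p u.
    rewrite E mem_cat; apply/orP; left; rewrite -{1}Hl /=.
    by apply: mem_last.
  by rewrite (negbTE vnot).
case zS : (z \in S).
  by exists z, (last v p1); split => //; apply/implyP => /eqP /zh ->.
have /andP[/eqP bv /eqP zu] := H _ z bK nz ebz (negbT zS).
move: (zh bv); rewrite zu; case: p pn un {pth E vnot zh cyc uK'} => // q p _ /= /andP[].
by rewrite !inE => /norP[_ /norP[/negP uq _]] _ uqe; rewrite uqe eqxx in uq.
Qed.

Definition dv (T : finType) (e : rel T) u v S := del_vertices (del_edge e u v) S.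
Arguments dv {T} e u v S.
Definition comp (T : finType) (e : rel T) (u v : T) (S : {set T}) (y : T) :=
  [set z in ~: S | connect (dv e u v S) y z].
Definition pr (T : eqType) (u v y z : T) := (y == u) && (z == v) || (y == v) && (z == u).
Arguments dv {T} e u v S.
Arguments comp {T} e u v S y.
Arguments pr {T} u v y z.

Lemma compP (T : finType) (e : rel T) (u v : T) (S : {set T}) (y z : T) :
  (z \in comp e u v S y) = (z \notin S) && connect (dv e u v S) y z.
Proof. by rewrite /comp inE in_setC. Qed.

Lemma compin (T : finType) (e : rel T) (u v : T) (S : {set T}) (y : T) : y \notin S -> y \in comp e u v S y.
Proof. by move=> yS; rewrite compP yS connect0. Qed.

Lemma compE (T : finType) (e : rel T) (u v : T) (S : {set T}) (y z : T) : symmetric e ->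
  z \in comp e u v S y -> comp e u v S z = comp e u v S y.
Proof.
move=> se; rewrite compP => /andP[_ yz]; apply/setP => w; rewrite !compP.
have cs : connect_sym (dv e u v S).
  by apply: sym_connect_sym; apply: del_vertices_sym; apply: del_edge_sym.
congr (_ && _); apply/idP/idP => [zw|yw]; first exact: connect_trans yz zw.
by rewrite cs in yz; exact: connect_trans yz yw.
Qed.

Arguments compE {T e u v S y z}.
Lemma compS (T : finType) (e : rel T) (u v : T) (S : {set T}) (y z : T) : z \in comp e u v S y -> z \notin S.
Proof. by rewrite compP => /andP[]. Qed.

Lemma Ladj (T : finType) (e : rel T) (u v : T) (S : {set T}) (y z : T) : symmetric e ->
  y \notin S -> z \notin S -> e y z -> comp e u v S y != comp e u v S z -> pr u v y z.
Proof.
move=> se yS zS eyz; apply: contraR => H.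
have zin : z \in comp e u v S y.
  rewrite compP zS /=; apply: connect1.
  by rewrite /dv /del_vertices /del_edge eyz yS zS /= andbT; exact: H.
by rewrite (compE se zin) eqxx.
Qed.
Arguments Ladj {T e u v S y z}.

Lemma claw3 (T : finType) (e : rel T) (u v : T) (S : {set T}) (x c1 c2 c3 : T) :
  symmetric e -> claw_free e ->
  c1 \notin S -> c2 \notin S -> c3 \notin S -> e x c1 -> e x c2 -> e x c3 ->
  comp e u v S c1 != comp e u v S c2 -> comp e u v S c1 != comp e u v S c3 ->
  comp e u v S c2 != comp e u v S c3 ->
  [|| pr u v c1 c2, pr u v c1 c3 | pr u v c2 c3].
Proof.
move=> se cf S1 S2 S3 e1 e2 e3 n12 n13 n23.
case E12 : (e c1 c2); first by rewrite (Ladj se S1 S2 E12 n12).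
case E13 : (e c1 c3); first by rewrite (Ladj se S1 S3 E13 n13) orbT.
case E23 : (e c2 c3); first by rewrite (Ladj se S2 S3 E23 n23) !orbT.
exfalso; apply: cf; exists x, c1, c2, c3; split; first by split.
split; last by rewrite E12 E13 E23.
split; [apply: contraNneq n12 | apply: contraNneq n13 | apply: contraNneq n23]; by move=> ->.
Qed.
Arguments claw3 {T e u v S x c1 c2 c3}.
Arguments compS {T e u v S y z}.

Lemma main_case (T : finType) (e : rel T) (u v : T) (S : {set T}) (x1 x2 a b : T) :
  symmetric e -> claw_free e -> (forall y z, connect e y z) ->
  u \notin S -> v \notin S -> comp e u v S u != comp e u v S v ->
  x1 \in S -> a \in comp e u v S u -> e a x1 ->
  x2 \in S -> b \in comp e u v S v -> e b x2 ->
  (x1 = x2 -> a = u -> b = v -> False) ->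
  #|[set comp e u v S y | y in ~: S]| <= 2 * #|S|.
Proof.
move=> se cf conn uS vS K12 x1S aK ax1 x2S bK bx2 bad.
set C := comp e u v S.
set K1 := C u. set K2 := C v.
set P' := [set C y | y in ~: S].
have {}K12 : K1 != K2 := K12.
have K21 : K2 != K1 by rewrite eq_sym.
have inP' : forall y, y \notin S -> C y \in P'.
  by move=> y yS; apply: imset_f; rewrite in_setC.
have memP' : forall K, K \in P' -> exists2 y, y \notin S & K = C y.
  by move=> K /imsetP[y]; rewrite in_setC; exists y.
pose touch x (K : {set T}) := [exists y in K, e x y].
pose Tx x := [set K in P' | [&& touch x K, ~~ ((K == K1) && (x != x1))
                                 & ~~ ((K == K2) && (x != x2))]].
have cover : P' \subset \bigcup_(x in S) Tx x.
  apply/subsetP => K KP; apply/bigcupP.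
  have [->|n1] := eqVneq K K1.
    exists x1 => //; rewrite inE inP' // !eqxx (negbTE K12) /= !andbT.
    by apply/existsP; exists a; rewrite aK se ax1.
  have [->|n2] := eqVneq K K2.
    exists x2 => //; rewrite inE inP' // !eqxx (negbTE K21) /= !andbT.
    by apply/existsP; exists b; rewrite bK se bx2.
  have [y yS Ky] := memP' K KP.
  have /connectP[p pth lst] := conn y x1.
  have yK : y \in K by rewrite Ky compin.
  have nx1 : ~~ (fun z => z \in K) (last y p).
    by rewrite /= -lst Ky; apply: contraTN x1S; apply: compS.
  have [p1 [z [p2 [_ allK nz ebz]]]] := @exit_path _ e (fun z => z \in K) y p pth yK nx1.
  have b'K : last y p1 \in K by apply: (allP allK); apply: mem_last.
  case zS: (z \in S).
    exists z => //; rewrite inE KP (negbTE n1) (negbTE n2) /= !andbT.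
    by apply/existsP; exists (last y p1); rewrite b'K se.
  exfalso.
  have b'S : last y p1 \notin S by move: b'K; rewrite Ky; apply: compS.
  have Cb' : C (last y p1) = K by move: b'K; rewrite Ky; apply: (compE se).
  have nzC : C (last y p1) != C z.
    by rewrite Cb'; apply: contraNneq nz => ->; apply: compin; rewrite zS.
  case/orP: (Ladj se b'S (negbT zS) ebz nzC) => /andP[/eqP bu _].
    by move: n1; rewrite -Cb' bu eqxx.
  by move: n2; rewrite -Cb' bu eqxx.
have aS : a \notin S := compS aK.
have bS : b \notin S := compS bK.
have Ca : C a = K1 := compE se aK.
have Cb : C b = K2 := compE se bK.
have badcase : forall x c, x = x1 -> x = x2 -> c \notin S -> e x c ->
    C c != K1 -> C c != K2 -> False.
  move=> x c xx1 xx2 cS exc n1 n2.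
  have exa : e x a by rewrite xx1 se.
  have exb : e x b by rewrite xx2 se.
  have nab : C a != C b by rewrite Ca Cb.
  have nac : C a != C c by rewrite Ca eq_sym.
  have nbc : C b != C c by rewrite Cb eq_sym.
  case/or3P: (claw3 se cf aS bS cS exa exb exc nab nac nbc).
  - case/orP => /andP[/eqP au /eqP bv]; first by apply: bad => //; rewrite -xx1 -xx2.
    have E : K2 = K1 by rewrite -Ca au.
    by move: K12; rewrite E eqxx.
  - by case/orP => /andP[_ /eqP cv]; [move: n2 | move: n1]; rewrite cv eqxx.
  - by case/orP => /andP[_ /eqP cv]; [move: n2 | move: n1]; rewrite cv eqxx.
have bound : forall x, x \in S -> #|Tx x| <= 2.
  move=> x xS; rewrite leqNgt; apply/negP => /card_gt2P [K [K' [K'' [[h1 h2 h3] [d1 d2 d3]]]]].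
  have ext : forall K0, K0 \in Tx x -> exists c, [/\ c \notin S, e x c & K0 = C c].
    move=> K0; rewrite inE => /andP[KP /andP[/existsP[c /andP[cK exc]] _]].
    have [y yS Ky] := memP' K0 KP.
    exists c; split => //; first by move: cK; rewrite Ky; apply: compS.
    by move: cK; rewrite Ky => cK; symmetry; exact: (compE se cK).
  have inT1 : K1 \in Tx x -> x = x1.
    by rewrite inE => /andP[_ /and3P[_ H _]]; move: H; rewrite eqxx /= => /negPn/eqP.
  have inT2 : K2 \in Tx x -> x = x2.
    by rewrite inE => /andP[_ /and3P[_ _ H]]; move: H; rewrite eqxx /= => /negPn/eqP.
  have pairbad : forall c1 c2 c3, C c1 \in Tx x -> C c2 \in Tx x -> c3 \notin S -> e x c3 ->
      C c3 != C c1 -> C c3 != C c2 -> pr u v c1 c2 -> False.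
    move=> c1 c2 c3 T1 T2 S3 e3 n31 n32.
    case/orP => /andP[/eqP E1 /eqP E2]; subst c1 c2.
      by apply: (badcase x c3) => //; [apply: inT1 | apply: inT2].
    by apply: (badcase x c3) => //; [apply: inT1 | apply: inT2].
  have [c1 [S1 e1 E1]] := ext K h1.
  have [c2 [S2 e2 E2]] := ext K' h2.
  have [c3 [S3 e3 E3]] := ext K'' h3.
  move: h1 h2 h3 d1 d2 d3; rewrite E1 E2 E3 => h1 h2 h3 d1 d2 d3.
  have d3' : C c1 != C c3 by rewrite eq_sym.
  case/or3P: (claw3 se cf S1 S2 S3 e1 e2 e3 d1 d3' d2).
  - by apply: (pairbad c1 c2 c3) => //; rewrite eq_sym.
  - by apply: (pairbad c1 c3 c2) => //; rewrite eq_sym.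
  - by apply: (pairbad c2 c3 c1) => //; rewrite eq_sym.
apply: leq_trans (@union_bound _ _ _ _ _ cover) _.
rewrite mulnC -sum_nat_const; apply: leq_sum => x xS; exact: bound x xS.
Qed.

Arguments del_vertices_sym {T e} S.
Arguments del_edge_sym {T e} u v.

Lemma conn_of_tough (T : finType) (e : rel T) :
  tough e (1/2)%R -> forall y z, connect e y z.
Proof.
move=> H y z.
have le1 : ncomp e set0 <= 1.
  rewrite leqNgt; apply/negP => c.
  have := @tough_half _ _ _ H c; rewrite cards0 muln0 leqn0 => /eqP E.
  by rewrite /cutset E in c.
move: le1; rewrite /ncomp => /card_le1_eqP E.
have yin : [set w in ~: set0 | connect (del_vertices e set0) y w] \in
   [set [set w in ~: (set0 : {set T}) | connect (del_vertices e set0) x w] | x in ~: set0].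
  by apply: imset_f; rewrite in_setC in_set0.
have zin : [set w in ~: set0 | connect (del_vertices e set0) z w] \in
   [set [set w in ~: (set0 : {set T}) | connect (del_vertices e set0) x w] | x in ~: set0].
  by apply: imset_f; rewrite in_setC in_set0.
have Eyz := E _ _ yin zin.
have : z \in [set w in ~: set0 | connect (del_vertices e set0) z w].
  by rewrite inE in_setC in_set0 connect0.
have Eyz' : [set w in ~: set0 | connect (del_vertices e set0) z w] =
            [set w in ~: set0 | connect (del_vertices e set0) y w].
  by move: Eyz => ->.
rewrite Eyz' inE => /andP[_]; apply: connect_sub => a c.
by rewrite /del_vertices => /andP[eac _]; apply: connect1.
Qed.

Arguments conn_of_tough {T e}.
Arguments tough_half {T e S}.
Arguments ncomp_eq {T e1 e2 S}.
Arguments main_case {T e u v S x1 x2 a b}.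

Theorem mainTheorem11 (T : finType) (e : rel T) :
  simple_graph e -> claw_free e -> minimally_tough e (1 / 2)%R ->
  forall s : seq T, is_graph_cycle e s -> size s = 3.
Proof.
move=> [se _] cf [[_ [tough0 _]] minim] s /and3P[s3 us cyc].
apply/eqP; rewrite eqn_leq s3 andbT leqNgt; apply/negP => s4.
case: s s3 s4 us cyc => [|u [|v [|w [|y r]]]] // _ _ us cyc.
have euv : e u v by move: cyc => /= /andP[].
have conn := conn_of_tough tough0.
have [t' [[_ [_ nt]] lt]] := minim u v euv.
have ntough := nt (1/2)%R lt.
set e' := del_edge e u v.
have [S /andP[cutS ltS]] : exists S, cutset e' S && (2 * #|S| < ncomp e' S).
  case: (boolP [exists S, cutset e' S && (2 * #|S| < ncomp e' S)]) =>
    [/existsP[S H]|/existsPn H]; first by exists S.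
  exfalso; apply: ntough => S cutS; have := H S.
  rewrite cutS /= -leqNgt -(ler_nat rat) natrM => Hle.
  lra.
have cs' : connect_sym (del_vertices e' S).
  exact: sym_connect_sym (del_vertices_sym S (del_edge_sym u v se)).
have notsame : ~~ [|| u \in S, v \in S | connect (dv e u v S) u v].
  apply/negP => Hc.
  have Eq : ncomp e S = ncomp e' S.
    apply: ncomp_eq => a c; apply/idP/idP.
      apply: connect_sub => {a c} a c Hac.
      have [Huv|Huv] := boolP (((a == u) && (c == v)) || ((a == v) && (c == u))).
        move: Hac; rewrite /del_vertices => /and3P[_ aS cS].
        case/orP: Huv => /andP[/eqP au /eqP cv]; subst a c;
          rewrite (negbTE aS) (negbTE cS) /= in Hc; first exact: Hc.
        by rewrite cs'.
      apply: connect1; move: Hac; rewrite /del_vertices /e' /del_edge => /and3P[-> -> ->].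
      by rewrite Huv.
    apply: connect_sub => {a c} a c.
    rewrite /del_vertices /e' /del_edge => /and3P[/andP[eac _] aS cS].
    by apply: connect1; rewrite /del_vertices eac aS cS.
  have cutE : cutset e S by rewrite /cutset Eq.
  by have := tough_half tough0 cutE; rewrite Eq leqNgt ltS.
move: notsame; rewrite !negb_or => /and3P[uS vS nuv].
have K12 : comp e u v S u != comp e u v S v.
  apply: contraNneq nuv => E.
  have : v \in comp e u v S u by rewrite E compin.
  by rewrite compP => /andP[].
have H2 : forall b z, b \in comp e u v S v -> z \notin comp e u v S v -> e b z ->
    z \notin S -> (b == v) && (z == u).
  move=> b z bK nz ebz zS.
  have bS := compS bK.
  have Cb := compE se bK.
  have nC : comp e u v S b != comp e u v S z.
    by rewrite Cb; apply: contraNneq nz => ->; exact: compin.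
  case/orP: (Ladj se bS zS ebz nC) => /andP[/eqP bu /eqP zv]; last by rewrite bu zv !eqxx.
  by move: K12; rewrite -Cb bu eqxx.
have H1 : forall b z, b \in comp e u v S u -> z \notin comp e u v S u -> e b z ->
    z \notin S -> (b == u) && (z == v).
  move=> b z bK nz ebz zS.
  have bS := compS bK.
  have Cb := compE se bK.
  have nC : comp e u v S b != comp e u v S z.
    by rewrite Cb; apply: contraNneq nz => ->; exact: compin.
  case/orP: (Ladj se bS zS ebz nC) => /andP[/eqP bu /eqP zv]; first by rewrite bu zv !eqxx.
  by move: K12; rewrite -Cb bu eqxx.
have uK2 : u \notin comp e u v S v.
  rewrite compP negb_and; apply/orP; right; rewrite /dv -/e' cs'; exact: nuv.
have vK1 : v \notin comp e u v S u.
  by rewrite compP negb_and nuv orbT.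
have [x2 [b [x2S bK bx2 hb]]] :=
  @side _ e S (comp e u v S v) u v (w :: y :: r) us cyc isT (@compin _ e u v S v vS) uK2 H2.
have Erot : v :: u :: rev (w :: y :: r) =
            rot (size (rev (w :: y :: r))) (rev (u :: v :: w :: y :: r)).
  by rewrite (rev_cons u) (rev_cons v) -!cats1 -catA rot_size_cat.
have cyc' : cycle e (v :: u :: rev (w :: y :: r)).
  have Hs : (fun z => e^~ z) =2 e by move=> a c /=; rewrite se.
  by rewrite Erot rot_cycle rev_cycle (eq_cycle Hs).
have us' : uniq (v :: u :: rev (w :: y :: r)) by rewrite Erot rot_uniq rev_uniq.
have rn : rev (w :: y :: r) != [::].
  by rewrite rev_cons -cats1; case: (rev _).
have [x1 [a [x1S aK ax1 ha]]] :=
  @side _ e S (comp e u v S u) v u (rev (w :: y :: r)) us' cyc' rn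
     (@compin _ e u v S u uS) vK1 H1.
have := main_case se cf conn uS vS K12 x1S aK ax1 x2S bK bx2.
have ltS' : 2 * #|S| < #|[set comp e u v S y | y in ~: S]| := ltS.
move=> Hm.
suff : #|[set comp e u v S y | y in ~: S]| <= 2 * #|S| by rewrite leqNgt ltS'.
apply: Hm => E au bv.
move: hb ha; rewrite au bv !eqxx /= head_rev /= E => /eqP -> /eqP.
move: us => /= /andP[_ /andP[_ /andP[wn _]]] wl.
by move: wn; rewrite wl mem_last.
Qed.
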